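(* Let $\hat x^{(1)},\hat x^{(2)}\in\mathcal{X}$ be distinct and $\hat w_2\in\mathbb{R}$, and let $\hat w_1=\frac{\hat x^{(2)}-\hat x^{(1)}}{\|\hat x^{(2)}-\hat x^{(1)}\|}$. For any $\epsilon>0$ there exist $M\in\mathbb{N}_{>0}$, $M$ pairs of distinct points $(x^{(2)}_i,x^{(1)}_i)\in\mathcal{X}\times\mathcal{X}$ and scalars $\tilde w_i\in\mathbb{R}$, $i=1,\dots,M$, such that for all $x\in\mathcal{X}$ $$\left|\hat w_2\,\phi(\langle\hat w_1,x-\hat x^{(1)}\rangle)-\sum_{i=1}^M\tilde w_i\left[\psi(\langle w_i,x-x^{(1)}_i\rangle-s_2)+1\right]\right|<\epsilon,$$ where $w_i=s_1\frac{x^{(2)}_i-x^{(1)}_i}{\|x^{(2)}_i-x^{(1)}_i\|^2}$.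
   Context: $\phi(t)=\max\{t,0\}$, $\psi=\tanh$, $s_2=\frac{\ln3}{2}$, $s_1=2s_2=\ln 3$. Euclidean norm and inner product on $\mathbb{R}^D$. For $A\subseteq\mathbb{R}^D$ let $d(z,A)=\inf_{a\in A}\|z-a\|$, $\mathrm{Med}(A)=\{z:\exists p\neq q\in A,\ \|p-z\|=\|q-z\|=d(z,A)\}$, reach $\tau_A=\inf_{a\in A}d(a,\mathrm{Med}(A))$. Let $\mathcal{X}'\subset\mathbb{R}^D$ be nonempty compact with $\tau_{\mathcal{X}'}>0$, fix $0<\epsilon_I<\min\{\tau_{\mathcal{X}'},1\}$, and $\mathcal{X}=\{x:d(x,\mathcal{X}')\le\epsilon_I\}$. *)

(* Defs.v *)
From Stdlib Require Import Reals.
From mathcomp Require Import ssreflect ssrfun ssrbool eqtype ssrnat seq fintype bigop.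
Open Scope R_scope.

Definition vec (D : nat) := 'I_D -> R.

Definition vsub {D} (x y : vec D) : vec D := fun i => x i - y i.
Definition inner {D} (x y : vec D) : R := \big[Rplus/0]_(i < D) (x i * y i).
Definition vnorm {D} (x : vec D) : R := sqrt (inner x x).
Definition vscale {D} (c : R) (x : vec D) : vec D := fun i => c * x i.

(* phi = ReLU; psi = Stdlib Rtrigo_def.tanh *)
Definition relu (t : R) : R := Rmax t 0.
Definition s2 : R := ln 3 / 2.
Definition s1 : R := ln 3.

Definition is_dist {D} (A : vec D -> Prop) (z : vec D) (r : R) : Prop :=
  (forall a, A a -> r <= vnorm (vsub z a)) /\
  (forall e, 0 < e -> exists a, A a /\ vnorm (vsub z a) < r + e).

Definition Med {D} (A : vec D -> Prop) (z : vec D) : Prop :=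
  exists p q, p <> q /\ A p /\ A q /\
    vnorm (vsub p z) = vnorm (vsub q z) /\ is_dist A z (vnorm (vsub p z)).

(* e < tau_A = inf_{a in A} d(a, Med A)  (tau_A may be +infinity) *)
Definition reach_gt {D} (A : vec D -> Prop) (e : R) : Prop :=
  exists r, e < r /\ forall a m, A a -> Med A m -> r <= vnorm (vsub a m).

(* compactness in R^D (Heine-Borel: closed and bounded) *)
Definition vclosed {D} (A : vec D -> Prop) : Prop :=
  forall z, ~ A z -> exists e, 0 < e /\ forall a, A a -> e <= vnorm (vsub z a).
Definition vbounded {D} (A : vec D -> Prop) : Prop :=
  exists B, forall a, A a -> vnorm a <= B.
Definition vcompact {D} (A : vec D -> Prop) : Prop := vclosed A /\ vbounded A.

Definition thicken {D} (A : vec D -> Prop) (eps : R) (x : vec D) : Prop :=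
  exists r, is_dist A x r /\ r <= eps.

(* Main.v *)
Require Import Defs.
From HB Require Import structures.
From Stdlib Require Import Reals Lra Lia FunctionalExtensionality Classical List.
From mathcomp Require Import ssreflect ssrfun ssrbool eqtype ssrnat seq fintype bigop.
From mathcomp Require Import zify.
Open Scope R_scope.

Lemma Rplus_assoc' : associative Rplus. Proof. by move=> x y z; rewrite Rplus_assoc. Qed.
HB.instance Definition _ := Monoid.isComLaw.Build R 0 Rplus Rplus_assoc' Rplus_comm Rplus_0_l.

Lemma sumZ (D : nat) (a : R) (f : 'I_D -> R) :
  \big[Rplus/0]_(i < D) (a * f i) = a * \big[Rplus/0]_(i < D) f i.
Proof.
apply: (big_ind2 (fun x y => x = a * y)); first by rewrite Rmult_0_r.
- by move=> x1 x2 y1 y2 -> ->; rewrite Rmult_plus_distr_l.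
- by [].
Qed.

Lemma sum_lin (D : nat) (a b : R) (f g : 'I_D -> R) :
  \big[Rplus/0]_(i < D) (a * f i + b * g i)
  = a * \big[Rplus/0]_(i < D) f i + b * \big[Rplus/0]_(i < D) g i.
Proof. by rewrite big_split /= !sumZ. Qed.

Lemma sum_le (D : nat) (f g : 'I_D -> R) : (forall i, f i <= g i) ->
  \big[Rplus/0]_(i < D) f i <= \big[Rplus/0]_(i < D) g i.
Proof.
move=> H; apply: (big_ind2 (fun x y => x <= y)); first lra.
- move=> x1 x2 y1 y2 ? ?; lra.
- by move=> i _; apply: H.
Qed.

Lemma sum_ge0 (D : nat) (P : pred 'I_D) (f : 'I_D -> R) : (forall i, 0 <= f i) ->
  0 <= \big[Rplus/0]_(i < D | P i) f i.
Proof.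
move=> H; apply: (big_ind (fun x => 0 <= x)); first lra.
- move=> x y ? ?; lra.
- by move=> i _; apply: H.
Qed.

Lemma inner_ge0 {D} (x : vec D) : 0 <= inner x x.
Proof. apply: sum_ge0 => i; apply: Rle_0_sqr. Qed.

Lemma inner_zero {D} (x : vec D) : inner x x = 0 -> forall i, x i = 0.
Proof.
move=> H i; move: H; rewrite /inner (bigD1 i) //=.
have := @sum_ge0 D (fun j => j != i) (fun j => x j * x j) (fun j => Rle_0_sqr (x j)).
have := Rle_0_sqr (x i). move=> h1 h2 h3; unfold Rsqr in *.
have h4 : x i * x i = 0.
{ set A := x i * x i in h1 h3 *. set B := bigop _ _ _ in h2 h3. lra. }
by case: (Rmult_integral _ _ h4).
Qed.

Lemma vnorm_sq {D} (x : vec D) : vnorm x ^ 2 = inner x x.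
Proof. rewrite /vnorm /= Rmult_1_r sqrt_sqrt //; apply: inner_ge0. Qed.

Lemma vnorm_ge0 {D} (x : vec D) : 0 <= vnorm x.
Proof. apply: sqrt_pos. Qed.

Definition Pt {D} (a u : vec D) (s : R) : vec D := fun i => a i + s * u i.

Definition termf {D} (p q x : vec D) : R :=
  tanh (inner (vscale (s1 / (vnorm (vsub q p))^2) (vsub q p)) (vsub x p) - s2) + 1.

Lemma inner_Pt {D} (a u xh1 x : vec D) (c r1 r2 : R) :
  inner (vscale c (vsub (Pt a u r2) (Pt a u r1))) (vsub x (Pt a u r1))
  = c * (r2 - r1) * (inner u (vsub x xh1) - inner u (vsub a xh1) - r1 * inner u u).
Proof.
rewrite /inner.
rewrite (eq_bigr (fun i => (c * (r2 - r1) * (u i * vsub x xh1 i) + (- (c * (r2 - r1))) * (u i * vsub a xh1 i))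
   + (- (c * (r2 - r1) * r1)) * (u i * u i))); last first.
  by move=> i _; rewrite /vscale /vsub /Pt; ring.
rewrite big_split /= sum_lin sumZ. set A := bigop _ _ _. set B := bigop _ _ _. set C := bigop _ _ _. ring.
Qed.

Lemma vnorm_Pt {D} (a u : vec D) (r1 r2 : R) : inner u u = 1 ->
  vnorm (vsub (Pt a u r2) (Pt a u r1)) = Rabs (r2 - r1).
Proof.
move=> hu; rewrite /vnorm /inner.
rewrite (eq_bigr (fun i => ((r2 - r1) * (r2 - r1)) * (u i * u i))); last first.
  by move=> i _; rewrite /vsub /Pt; ring.
rewrite sumZ; rewrite /inner in hu; rewrite hu Rmult_1_r.
by rewrite -sqrt_Rsqr_abs.
Qed.

Lemma termf_Pt {D} (a u xh1 x : vec D) (r1 r2 : R) : inner u u = 1 -> r1 <> r2 ->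
  termf (Pt a u r1) (Pt a u r2) x
  = tanh ((s1 / (r2 - r1)) * (inner u (vsub x xh1) - inner u (vsub a xh1) - r1) - s2) + 1.
Proof.
move=> hu hne; rewrite /termf (inner_Pt _ _ xh1) vnorm_Pt // pow2_abs hu.
have hd : r2 - r1 <> 0 by lra.
congr (tanh _ + 1); field; auto.
Qed.

Lemma Pt_neq {D} (a u : vec D) (r1 r2 : R) : inner u u = 1 -> r1 <> r2 ->
  Pt a u r1 <> Pt a u r2.
Proof.
move=> hu hne E.
have : vnorm (vsub (Pt a u r2) (Pt a u r1)) = 0.
  rewrite E /vnorm /inner (eq_bigr (fun _ => 0)); last by move=> i _; rewrite /vsub; ring.
  rewrite big1_eq sqrt_0 //.
rewrite vnorm_Pt // => h; have : r2 - r1 <> 0 by lra.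
move=> /Rabs_pos_lt; lra.
Qed.

Lemma vnorm_Pt0 {D} (a u : vec D) (r : R) : inner u u = 1 ->
  vnorm (vsub (Pt a u r) a) = Rabs r.
Proof.
move=> hu; have -> : vsub (Pt a u r) a = vsub (Pt a u r) (Pt a u 0).
  by rewrite /vsub /Pt; apply: functional_extensionality => i; ring.
by rewrite vnorm_Pt // Rminus_0_r.
Qed.

Lemma dist_exists {D} (A : vec D -> Prop) (z : vec D) :
  (exists a, A a) -> exists r, is_dist A z r.
Proof.
move=> [a0 ha0].
pose E := fun r => exists a, A a /\ r = - vnorm (vsub z a).
have hb : bound E.
  exists 0 => r [a [_ ->]]; have := vnorm_ge0 (vsub z a); lra.
have hne : exists r, E r by exists (- vnorm (vsub z a0)); exists a0.
case: (completeness E hb hne) => m [hub hlub].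
exists (- m); split.
- move=> a ha; have : E (- vnorm (vsub z a)) by exists a.
  move/hub; lra.
- move=> e he; apply: NNPP => hn.
  have : is_upper_bound E (m - e).
    move=> r [a [ha ->]].
    have : ~ (vnorm (vsub z a) < - m + e) by move=> h; apply: hn; exists a.
    lra.
  move/hlub; lra.
Qed.

Lemma thicken_Pt {D} (X' : vec D -> Prop) (epsI : R) (a u : vec D) (r : R) :
  X' a -> inner u u = 1 -> Rabs r <= epsI -> thicken X' epsI (Pt a u r).
Proof.
move=> ha hu hr.
case: (dist_exists X' (Pt a u r)); first by exists a.
move=> d hd; exists d; split => //.
case: hd => h1 _; have := h1 a ha; rewrite vnorm_Pt0 //; lra.
Qed.

Lemma inner_half {D} (u v : vec D) : inner u v <= (inner u u + inner v v) / 2.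
Proof.
rewrite /inner.
have -> : (\big[Rplus/0]_(i < D) (u i * u i) + \big[Rplus/0]_(i < D) (v i * v i)) / 2
  = \big[Rplus/0]_(i < D) ((/2) * (u i * u i) + (/2) * (v i * v i)).
  rewrite sum_lin; field.
apply: sum_le => i; have h := Rle_0_sqr (u i - v i); unfold Rsqr in h; nra.
Qed.

Lemma thicken_bound {D} (X' : vec D -> Prop) (epsI : R) (xh1 : vec D) :
  vbounded X' -> epsI < 1 ->
  exists C, forall x, thicken X' epsI x -> inner (vsub x xh1) (vsub x xh1) <= C.
Proof.
move=> [B hB] he.
exists (3 * (4 + B ^ 2 + inner xh1 xh1)) => x [r [[h1 h2] hr]].
have [a [ha hxa]] := h2 1 Rlt_0_1.
have n1 : inner (vsub x a) (vsub x a) <= 4.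
  rewrite -vnorm_sq; have := vnorm_ge0 (vsub x a); move=> hv0.
  have hv : vnorm (vsub x a) < 2 by lra.
  nra.
have n2 : inner a a <= B ^ 2.
  rewrite -vnorm_sq; have := vnorm_ge0 a; have := hB a ha; move=> hv0 hv1.
  nra.
have -> : 3 * (4 + B ^ 2 + inner xh1 xh1) = 3 * (4 + B ^ 2) + 3 * inner xh1 xh1 by ring.
apply: Rle_trans (_ : 3 * (inner (vsub x a) (vsub x a) + inner a a) + 3 * inner xh1 xh1 <= _); last by lra.
have -> : 3 * (inner (vsub x a) (vsub x a) + inner a a) + 3 * inner xh1 xh1
  = \big[Rplus/0]_(i < D) (3 * (vsub x a i * vsub x a i) + 3 * (a i * a i + xh1 i * xh1 i)).
  rewrite sum_lin /inner big_split /=; ring.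
apply: sum_le => i; rewrite /vsub.
have h1' := Rle_0_sqr (x i - a i - a i). have h2' := Rle_0_sqr (a i + xh1 i).
have h3' := Rle_0_sqr (x i - a i + xh1 i). unfold Rsqr in *. nra.
Qed.

Definition Lg (z : R) : R := / (1 + exp (- z)).

Lemma Lg_bounds z : 0 < Lg z <= 1.
Proof.
rewrite /Lg; have := exp_pos (- z) => h; split.
- apply: Rinv_0_lt_compat; lra.
- rewrite -Rinv_1; apply: Rinv_le_contravar; lra.
Qed.

Lemma Lg_incr a b : a <= b -> Lg a <= Lg b.
Proof.
move=> h; rewrite /Lg; apply: Rinv_le_contravar.
- have := exp_pos (- b); lra.
- have : exp (- b) <= exp (- a).
    case: (Req_dec a b) => [->|hne]; first lra.
    apply: Rlt_le; apply: exp_increasing; lra.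
  lra.
Qed.

Lemma tanh_Lg z : tanh z + 1 = 2 * Lg (2 * z).
Proof.
rewrite /tanh /sinh /cosh /Lg.
have e1 := exp_pos z.
have -> : exp (- (2 * z)) = / (exp z * exp z).
  by rewrite -exp_plus -exp_Ropp; congr exp; ring.
rewrite exp_Ropp; field; split; try lra; nra.
Qed.

Definition sp (z : R) : R := ln (1 + exp z).

Lemma sp_deriv z : derivable_pt_lim sp z (Lg z).
Proof.
have h1 : 0 < 1 + exp z by have := exp_pos z; lra.
have -> : Lg z = / (1 + exp z) * (0 + exp z).
  rewrite /Lg exp_Ropp; have := exp_pos z => he; field; lra.
apply: (derivable_pt_lim_comp (fun x => 1 + exp x) ln).
- apply: derivable_pt_lim_plus; [apply: derivable_pt_lim_const | apply: derivable_pt_lim_exp].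
- by apply: derivable_pt_lim_ln.
Qed.

Lemma sp_diff a b : a <= b -> (b - a) * Lg a <= sp b - sp a <= (b - a) * Lg b.
Proof.
move=> hab; case: (Req_dec a b) => [->|hne]; first by rewrite !Rminus_diag !Rmult_0_l; lra.
have hlt : a < b by lra.
have [c [hc1 hc2]] := MVT_cor2 sp Lg a b hlt (fun c _ => sp_deriv c).
rewrite hc1; have h1 := Lg_incr a c ltac:(lra); have h2 := Lg_incr c b ltac:(lra).
split; nra.
Qed.

Lemma ln_le' x y : 0 < x -> x <= y -> ln x <= ln y.
Proof.
move=> hx hxy; case: (Req_dec x y) => [->|hn]; first lra.
apply: Rlt_le; apply: ln_increasing; lra.
Qed.

Lemma sp_relu z : 0 <= sp z - Rmax z 0 <= ln 2.
Proof.
have he := exp_pos z.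
rewrite /sp; case: (Rle_dec 0 z) => hz.
- rewrite Rmax_left //.
  have -> : ln (1 + exp z) - z = ln (1 + exp (- z)).
    have -> : 1 + exp (- z) = (1 + exp z) * exp (- z).
      rewrite exp_Ropp; field; lra.
    rewrite ln_mult; try lra; last by apply: exp_pos.
    rewrite ln_exp; ring.
  have h1 : exp (- z) <= 1.
    rewrite -exp_0; case: (Req_dec z 0) => [->|hn]; first by rewrite Ropp_0; lra.
    apply: Rlt_le; apply: exp_increasing; lra.
  have h0 := exp_pos (- z).
  split.
  + rewrite -ln_1; apply: ln_le'; lra.
  + have -> : 2 = 1 + 1 by ring. apply: ln_le'; lra.
- rewrite Rmax_right; last lra. rewrite Rminus_0_r.
  have h1 : exp z <= 1.
    rewrite -exp_0; apply: Rlt_le; apply: exp_increasing; lra.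
  split.
  + rewrite -ln_1; apply: ln_le'; lra.
  + have -> : 2 = 1 + 1 by ring. apply: ln_le'; lra.
Qed.

Lemma sp_neg z : z <= 0 -> 0 <= sp z <= ln 2.
Proof. move=> hz; have := sp_relu z; rewrite Rmax_right //; lra. Qed.

Lemma div_le_l x b y : 0 < b -> x <= b * y -> x / b <= y.
Proof.
move=> hb h; have -> : y = (b * y) / b by field; lra.
apply: Rmult_le_compat_r => //; apply: Rlt_le; apply: Rinv_0_lt_compat => //.
Qed.

Lemma div_le_r x b y : 0 < b -> b * y <= x -> y <= x / b.
Proof.
move=> hb h; have -> : y = (b * y) / b by field; lra.
apply: Rmult_le_compat_r => //; apply: Rlt_le; apply: Rinv_0_lt_compat => //.
Qed.

Fixpoint St (be de t : R) (n : nat) : R :=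
  match n with
  | O => 0
  | S n => St be de t n + de * Lg (be * (t - INR n * de))
  end.

Lemma St_sandwich be de t n : 0 < be -> 0 < de ->
  sp (be * t) / be - sp (be * (t - INR n * de)) / be <= St be de t n <=
  sp (be * t) / be - sp (be * (t - INR n * de)) / be
    + de * (Lg (be * t) - Lg (be * (t - INR n * de))).
Proof.
move=> hb hd; elim: n => [|n [IH1 IH2]].
- rewrite /= Rmult_0_l Rminus_0_r; lra.
- change (St be de t (S n)) with (St be de t n + de * Lg (be * (t - INR n * de))).
  rewrite S_INR.
  have hab : be * (t - (INR n + 1) * de) <= be * (t - INR n * de) by nra.
  have [d1 d2] := sp_diff _ _ hab.
  have ee : be * (t - INR n * de) - be * (t - (INR n + 1) * de) = be * de by ring.
  rewrite ee in d1 d2.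
  set A := sp (be * (t - INR n * de)) in IH1 IH2 d1 d2 *.
  set B := sp (be * (t - (INR n + 1) * de)) in d1 d2 *.
  set LA := Lg (be * (t - INR n * de)) in IH2 d1 d2 *.
  set LB := Lg (be * (t - (INR n + 1) * de)) in d1 d2 *.
  have e1 : (A - B) / be <= de * LA.
    apply: div_le_l => //; lra.
  have e2 : de * LB <= (A - B) / be.
    apply: div_le_r => //; lra.
  have -> : sp (be * t) / be - B / be = (sp (be * t) / be - A / be) + (A - B) / be by field; lra.
  split; lra.
Qed.

Lemma St_bound be de t n : 0 < be -> 0 < de -> t <= INR n * de ->
  Rabs (St be de t n - Rmax t 0) <= de + 2 * ln 2 / be.
Proof.
move=> hb hd ht.
have [h1 h2] := St_sandwich be de t n hb hd.
have [r1 r2] := sp_relu (be * t).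
have [n1 n2] := sp_neg (be * (t - INR n * de)) ltac:(nra).
have hm : Rmax (be * t) 0 = be * Rmax t 0.
  rewrite /Rmax; case: (Rle_dec (be * t) 0); case: (Rle_dec t 0) => ? ? ; nra.
rewrite hm in r1 r2.
have [l1 l2] := Lg_bounds (be * t). have [l3 l4] := Lg_bounds (be * (t - INR n * de)).
set S := sp (be * t) in h1 h2 r1 r2.
set S2 := sp (be * (t - INR n * de)) in h1 h2 n1 n2.
have q1 : S / be - Rmax t 0 <= ln 2 / be.
  have -> : S / be - Rmax t 0 = (S - be * Rmax t 0) / be by field; lra.
  apply: div_le_l => //; have -> : be * (ln 2 / be) = ln 2 by field; lra.
  lra.
have q2 : 0 <= S / be - Rmax t 0.
  have -> : S / be - Rmax t 0 = (S - be * Rmax t 0) / be by field; lra.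
  apply: div_le_r => //; lra.
have q3 : 0 <= S2 / be <= ln 2 / be.
  split; first by apply: div_le_r => //; lra.
  apply: div_le_l => //; have -> : be * (ln 2 / be) = ln 2 by field; lra.
  lra.
have -> : 2 * ln 2 / be = ln 2 / be + ln 2 / be by field; lra.
apply: Rabs_le; split; nra.
Qed.

Definition Rep {D} (S : vec D -> Prop) (F : vec D -> R) : Prop :=
  exists (M : nat) (x1 x2 : nat -> vec D) (wt : nat -> R),
    (0 < M)%nat /\ (forall i, (i < M)%nat -> S (x2 i) /\ S (x1 i) /\ x2 i <> x1 i) /\
    forall x, F x = \big[Rplus/0]_(0 <= i < M) (wt i * termf (x1 i) (x2 i) x).

Lemma sumZn (m n : nat) (a : R) (f : nat -> R) :
  \big[Rplus/0]_(m <= i < n) (a * f i) = a * \big[Rplus/0]_(m <= i < n) f i.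
Proof.
apply: (big_ind2 (fun x y => x = a * y)); first by rewrite Rmult_0_r.
- by move=> x1 x2 y1 y2 -> ->; rewrite Rmult_plus_distr_l.
- by [].
Qed.

Lemma Rep_ext {D} {S : vec D -> Prop} {F G} : Rep S F -> (forall x, F x = G x) -> Rep S G.
Proof.
move=> [M [x1 [x2 [wt [h0 [h1 h2]]]]]] he.
exists M, x1, x2, wt; split => //; split => // x; by rewrite -he.
Qed.

Lemma Rep_scale {D} {S : vec D -> Prop} {F} c : Rep S F -> Rep S (fun x => c * F x).
Proof.
move=> [M [x1 [x2 [wt [h0 [h1 h2]]]]]].
exists M, x1, x2, (fun i => c * wt i); split => //; split => // x.
rewrite h2 -sumZn; apply: eq_bigr => i _; ring.
Qed.

Lemma Rep_basic {D} {S : vec D -> Prop} {p q} : S p -> S q -> q <> p -> Rep S (termf p q).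
Proof.
move=> hp hq hne; exists 1%nat, (fun _ => p), (fun _ => q), (fun _ => 1).
split => //; split => // x; rewrite big_nat1; ring.
Qed.

Lemma Rep_add {D} {S : vec D -> Prop} {F G} : Rep S F -> Rep S G -> Rep S (fun x => F x + G x).
Proof.
move=> [M [x1 [x2 [wt [h0 [h1 h2]]]]]] [M' [y1 [y2 [wt' [h0' [h1' h2']]]]]].
exists (M + M')%nat, (fun i => if (i < M)%nat then x1 i else y1 (i - M)%nat),
  (fun i => if (i < M)%nat then x2 i else y2 (i - M)%nat),
  (fun i => if (i < M)%nat then wt i else wt' (i - M)%nat).
split; first by rewrite addn_gt0 h0.
split.
- move=> i hi; case: ifP => hiM; first by apply: h1.
  apply: h1'; move: hi hiM; lia.
- move=> x; rewrite (big_cat_nat _ (n := M)) //=; last by apply: leq_addr.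
  rewrite h2 h2'; congr (_ + _).
  + by apply: eq_big_nat => i /andP [_ ->].
  + rewrite -{1}(add0n M) big_addn addKn.
    apply: eq_big_nat => i _.
    have -> : (i + M < M)%nat = false by apply/negbTE; rewrite -leqNgt leq_addl.
    by rewrite addnK.
Qed.

Lemma Rep_sub {D} {S : vec D -> Prop} {F G} : Rep S F -> Rep S G -> Rep S (fun x => F x - G x).
Proof.
move=> hF hG; apply: (Rep_ext (Rep_add hF (Rep_scale (-1) hG))) => x; ring.
Qed.

Definition fk {D} (V : vec D -> R) (k : R) (x : vec D) : R := / (1 + k * V x).

Definition prodl {D} (V : vec D -> R) (l : list R) (x : vec D) : R :=
  fold_right (fun k acc => fk V k x * acc) 1 l.

Definition Gl {D} (V : vec D -> R) (l : list R) (x : vec D) : R :=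
  V x ^ (Nat.pred (length l)) * prodl V l x.

Lemma fk_diff {D} (V : vec D -> R) a b x : 0 <= V x -> 0 <= a -> 0 <= b ->
  fk V a x - fk V b x = (b - a) * V x * fk V a x * fk V b x.
Proof.
move=> hv ha hb; rewrite /fk.
have h1 : 1 + a * V x <> 0 by nra.
have h2 : 1 + b * V x <> 0 by nra.
field; auto.
Qed.

Lemma Gl_rep {D} (XS : vec D -> Prop) (V : vec D -> R) :
  (forall x, 0 <= V x) ->
  (forall k, /2 <= k <= 1 -> Rep XS (fk V k)) ->
  forall n l, length l = S n -> NoDup l -> (forall k, In k l -> /2 <= k <= 1) ->
  Rep XS (Gl V l).
Proof.
move=> hV hb; elim => [|n IH] l.
- case: l => [|k [|? ?]] //= _ _ hk.
  apply: (Rep_ext (hb k (hk k (or_introl erefl)))) => x.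
  rewrite /Gl /prodl /=; ring.
- case: l => [|a [|b l]] //= [hl] hnd hk.
  have hab : a <> b.
    move=> e; subst b; inversion hnd; apply: H1; left => //.
  have hnd1 : NoDup (a :: l).
    inversion hnd; inversion H2; constructor => //.
    by move=> h; apply: H1; right.
  have hnd2 : NoDup (b :: l) by inversion hnd.
  have r1 := IH (a :: l) ltac:(by rewrite /= hl) hnd1
    (fun k hk' => hk k ltac:(case: hk' => [->|h]; [left | right; right] => //)).
  have r2 := IH (b :: l) ltac:(by rewrite /= hl) hnd2
    (fun k hk' => hk k ltac:(case: hk' => [->|h]; [right; left | right; right] => //)).
  have ha := hk a (or_introl erefl).
  have hb' := hk b (or_intror (or_introl erefl)).
  apply: (Rep_ext (Rep_scale (/ (b - a)) (Rep_sub r1 r2))) => x.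
  rewrite /Gl /= hl /prodl /=.
  set P := fold_right _ _ _.
  have e := fk_diff V a b x (hV x) ltac:(lra) ltac:(lra).
  have -> : V x ^ n * (fk V a x * P) - V x ^ n * (fk V b x * P) = V x ^ n * P * (fk V a x - fk V b x) by ring.
  rewrite e; have hba : b - a <> 0 by lra.
  field; auto.
Qed.

Definition node (j : nat) : R := / 2 + / (2 * (INR j + 1)).

Lemma node_bounds j : / 2 <= node j <= 1.
Proof.
rewrite /node; have h := pos_INR j.
have h1 : 0 < / (2 * (INR j + 1)) by apply: Rinv_0_lt_compat; lra.
have h2 : / (2 * (INR j + 1)) <= / 2.
  apply: Rinv_le_contravar; lra.
lra.
Qed.

Lemma node_inj i j : node i = node j -> i = j.
Proof.
rewrite /node => h.
have h' : / (2 * (INR i + 1)) = / (2 * (INR j + 1)) by lra.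
have hi := pos_INR i; have hj := pos_INR j.
have : 2 * (INR i + 1) = 2 * (INR j + 1).
  rewrite -(Rinv_inv (2 * (INR i + 1))) h' Rinv_inv //.
move=> e; apply: INR_eq; lra.
Qed.

Definition nodes (N : nat) : list R := List.map node (List.seq 0 N).

Lemma prodl_app {D} (V : vec D -> R) l1 l2 x :
  prodl V (l1 ++ l2) x = prodl V l1 x * prodl V l2 x.
Proof. elim: l1 => [|a l IH] /=; rewrite /prodl /=; [ring | rewrite -/(prodl V _ x) IH /prodl; ring]. Qed.

Lemma prodl_S {D} (V : vec D -> R) N x :
  prodl V (nodes (S N)) x = prodl V (nodes N) x * fk V (node N) x.
Proof.
rewrite /nodes seq_S map_app prodl_app /=; rewrite /prodl /=; ring.
Qed.

Fixpoint cf (K : R) (N : nat) : R :=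
  match N with O => 1 | S N => cf K N * (node N - K) end.

Lemma lagrange {D} (XS : vec D -> Prop) (V : vec D -> R) :
  (forall x, 0 <= V x) ->
  (forall k, /2 <= k <= 1 -> Rep XS (fk V k)) ->
  forall K, 0 < K < /2 -> forall eta, 0 < eta ->
  exists F, Rep XS F /\ forall x, Rabs (fk V K x - F x) <= eta.
Proof.
move=> hV hb K hK eta heta.
have step : forall N, exists F, Rep XS F /\ forall x,
    fk V K x - F x = cf K N * V x ^ N * prodl V (nodes N) x * fk V K x.
  elim => [|N [F [hF hFe]]].
  - exists (fun x => 0 * fk V 1 x); split.
    + apply: Rep_scale; apply: hb; lra.
    + move=> x; rewrite /= /prodl /=; ring.
  - have hG := Gl_rep XS V hV hb N (nodes (S N))
      ltac:(by rewrite /nodes map_length seq_length)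
      ltac:(apply: NoDup_map_NoDup_ForallPairs; [move=> ? ? _ _; exact: node_inj | apply: seq_NoDup])
      ltac:(move=> k /in_map_iff [j [<- _]]; apply: node_bounds).
    exists (fun x => F x + cf K N * Gl V (nodes (S N)) x); split.
    + apply: Rep_add => //; apply: Rep_scale => //.
    + move=> x.
      have hGl : Gl V (nodes (S N)) x = V x ^ N * prodl V (nodes (S N)) x.
        by rewrite /Gl /nodes map_length seq_length.
      have hn := node_bounds N.
      have e := fk_diff V (node N) K x (hV x) ltac:(lra) ltac:(lra).
      rewrite hGl prodl_S /=.
      have -> : fk V K x - (F x + cf K N * (V x ^ N * (prodl V (nodes N) x * fk V (node N) x)))
        = (fk V K x - F x) - cf K N * (V x ^ N * (prodl V (nodes N) x * fk V (node N) x)) by ring.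
      rewrite hFe.
      have -> : cf K N * V x ^ N * prodl V (nodes N) x * fk V K x -
        cf K N * (V x ^ N * (prodl V (nodes N) x * fk V (node N) x))
        = - (cf K N * V x ^ N * prodl V (nodes N) x) * (fk V (node N) x - fk V K x) by ring.
      rewrite e; ring.
have bnd : forall N x, 0 <= cf K N * V x ^ N * prodl V (nodes N) x * fk V K x <= (1 - K) ^ N.
  move=> N x; elim: N => [|N [IH1 IH2]].
  - rewrite /= /prodl /= /fk.
    have h0 := hV x.
    have : / (1 + K * V x) <= 1 by rewrite -Rinv_1; apply: Rinv_le_contravar; nra.
    have : 0 < / (1 + K * V x) by apply: Rinv_0_lt_compat; nra.
    lra.
  - have hn := node_bounds N.
    have -> : cf K (S N) * V x ^ S N * prodl V (nodes (S N)) x * fk V K x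
      = (cf K N * V x ^ N * prodl V (nodes N) x * fk V K x) * ((node N - K) * V x * fk V (node N) x).
      rewrite prodl_S /=; ring.
    have h0 := hV x.
    have q1 : 0 <= (node N - K) * V x * fk V (node N) x.
      rewrite /fk; have : 0 < / (1 + node N * V x) by apply: Rinv_0_lt_compat; nra.
      move=> ?; apply: Rmult_le_pos => //; nra.
    have q2 : (node N - K) * V x * fk V (node N) x <= 1 - K.
      rewrite /fk; have hp : 0 < 1 + node N * V x by nra.
      apply: (Rmult_le_reg_r (1 + node N * V x)) => //.
      have -> : (node N - K) * V x * / (1 + node N * V x) * (1 + node N * V x) = (node N - K) * V x.
        field; lra.
      have : 0 <= K * V x * (1 - node N).
        apply: Rmult_le_pos; [apply: Rmult_le_pos|]; lra.
      nra.
    split; first by apply: Rmult_le_pos.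
    rewrite /= Rmult_comm; apply: Rmult_le_compat => //.
have [N0 hN] := pow_lt_1_zero (1 - K) ltac:(rewrite Rabs_pos_eq; lra) eta heta.
have [F [hF hFe]] := step N0.
exists F; split => // x; rewrite hFe.
have [b1 b2] := bnd N0 x.
have := hN N0 (le_n N0); rewrite Rabs_pos_eq; last by apply: pow_le; lra.
rewrite Rabs_pos_eq //; lra.
Qed.

Lemma tanh_opp z : tanh (- z) = - tanh z.
Proof.
rewrite /tanh /sinh /cosh Ropp_involutive.
have h1 := exp_pos z; have h2 := exp_pos (- z).
field; lra.
Qed.

Lemma s1_s2 : s1 = 2 * s2.
Proof. rewrite /s1 /s2; field. Qed.

Lemma ln3_pos : 0 < ln 3.
Proof. rewrite -ln_1; apply: ln_increasing; lra. Qed.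

Lemma termf_fk {D} (a u xh1 : vec D) (h sg : R) (x : vec D) : inner u u = 1 -> 0 < h ->
  termf (Pt a u sg) (Pt a u (sg + h)) x
  = 2 * fk (fun y => exp (- (2 * s1 / h) * (inner u (vsub y xh1) - inner u (vsub a xh1))))
           (exp ((2 * s1 / h) * sg + ln 3)) x.
Proof.
move=> hu hh; rewrite (termf_Pt _ _ xh1) //; last lra.
rewrite tanh_Lg /Lg /fk; congr (2 * / (1 + _)).
rewrite -exp_plus; congr exp.
have -> : sg + h - sg = h by ring.
rewrite /s2 /s1; field; lra.
Qed.

Lemma termf_const {D} (a u xh1 : vec D) (h : R) (x : vec D) : inner u u = 1 -> 0 < h ->
  termf (Pt a u 0) (Pt a u h) x + termf (Pt a u h) (Pt a u 0) x = 2.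
Proof.
move=> hu hh; rewrite !(termf_Pt _ _ xh1) //; try lra.
have -> : s1 / (0 - h) * (inner u (vsub x xh1) - inner u (vsub a xh1) - h) - s2
  = - (s1 / (h - 0) * (inner u (vsub x xh1) - inner u (vsub a xh1) - 0) - s2).
  rewrite s1_s2; field; lra.
rewrite tanh_opp; lra.
Qed.

Lemma fk_approx {D} (Xs : vec D -> Prop) (a u xh1 : vec D) (h : R) :
  inner u u = 1 -> 0 < h -> (forall r, Rabs r <= h -> Xs (Pt a u r)) ->
  let Y := fun y => exp (- (2 * s1 / h) * (inner u (vsub y xh1) - inner u (vsub a xh1))) in
  forall K, 0 < K -> forall eta, 0 < eta ->
  exists F, Rep Xs F /\ forall x, Rabs (fk Y K x - F x) <= eta.
Proof.
move=> hu hh hP Y.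
have hs1 : 0 < s1 by rewrite /s1; apply: ln3_pos.
have hbe : 0 < 2 * s1 / h by rewrite /s1; have := ln3_pos; move=> ?; apply: Rdiv_lt_0_compat; lra.
have hY : forall x, 0 < Y x by move=> x; apply: exp_pos.
have basic : forall k, /2 <= k <= 1 -> Rep Xs (fk Y k).
  move=> k hk.
  pose sg := (ln k - ln 3) / (2 * s1 / h).
  have hk0 : 0 < k by lra.
  have hlnk : ln k <= 0 by rewrite -ln_1; apply: ln_le'; lra.
  have hlnk2 : - ln 3 <= ln k.
    rewrite -ln_Rinv; last lra. apply: ln_le'; lra.
  have hsg1 : sg <= 0.
    rewrite /sg; have := ln3_pos => ?.
    have : (ln k - ln 3) / (2 * s1 / h) < 0 by apply: Rdiv_neg_pos; lra.
    lra.
  have hsg2 : - h <= sg.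
    rewrite /sg /s1; have := ln3_pos => ?.
    apply: div_le_r; first by apply: Rdiv_lt_0_compat; lra.
    have -> : 2 * ln 3 / h * - h = - (2 * ln 3) by field; lra.
    lra.
  have hR : Rep Xs (termf (Pt a u sg) (Pt a u (sg + h))).
    apply: Rep_basic; try apply: hP; try (rewrite Rabs_left1; lra); try (rewrite Rabs_pos_eq; lra).
    apply: Pt_neq => //; lra.
  apply: (Rep_ext (Rep_scale (/2) hR)) => x.
  rewrite (termf_fk _ _ xh1) //.
  have -> : 2 * s1 / h * sg + ln 3 = ln k by rewrite /sg; field; split; lra.
  rewrite exp_ln // /Y; lra.
have const : Rep Xs (fun _ => 1).
  have h0 : Xs (Pt a u 0) by apply: hP; rewrite Rabs_R0; lra.
  have h1 : Xs (Pt a u h) by apply: hP; rewrite Rabs_pos_eq; lra.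
  have r1 : Rep Xs (termf (Pt a u 0) (Pt a u h)) by apply: Rep_basic => //; apply: Pt_neq => //; lra.
  have r2 : Rep Xs (termf (Pt a u h) (Pt a u 0)) by apply: Rep_basic => //; apply: Pt_neq => //; lra.
  apply: (Rep_ext (Rep_scale (/2) (Rep_add r1 r2))) => x.
  rewrite (termf_const _ _ xh1) //; field.
pose V2 := fun x => 2 * / Y x.
have hV2 : forall x, 0 <= V2 x.
  move=> x; rewrite /V2; have := hY x => ?; apply: Rmult_le_pos; try lra.
  apply: Rlt_le; apply: Rinv_0_lt_compat; lra.
have basic2 : forall k, /2 <= k <= 1 -> Rep Xs (fk V2 k).
  move=> k hk.
  have hk' : /2 <= / (2 * k) <= 1.
    split.
    - apply: Rinv_le_contravar; lra.
    - rewrite -Rinv_1; apply: Rinv_le_contravar; lra.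
  apply: (Rep_ext (Rep_sub const (basic _ hk'))) => x.
  rewrite /fk /V2; have := hY x => ?; field; split; try lra.
move=> K hK eta heta.
case: (Rlt_le_dec K (/2)) => hK1.
  apply: (lagrange Xs Y) => //; try lra; by move=> x; apply: Rlt_le.
case: (Rle_lt_dec K 1) => hK2.
  exists (fk Y K); split; first by apply: basic; lra.
  move=> x; rewrite Rminus_diag Rabs_R0; lra.
have hK3 : 0 < / (2 * K) < / 2.
  split; first by apply: Rinv_0_lt_compat; lra.
  apply: Rinv_lt_contravar; nra.
have [F [hF hFe]] := lagrange Xs V2 hV2 basic2 _ hK3 eta heta.
exists (fun x => 1 - F x); split; first by apply: Rep_sub.
move=> x; have := hFe x.
have -> : fk Y K x - (1 - F x) = - (fk V2 (/ (2 * K)) x - F x).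
  rewrite /fk /V2; have := hY x => ?; field; split; try lra; nra.
by rewrite Rabs_Ropp.
Qed.

Lemma core {D} (Xs : vec D -> Prop) (a u xh1 : vec D) (epsI T wh2 eps : R) :
  inner u u = 1 -> 0 < epsI -> (forall r, Rabs r <= epsI -> Xs (Pt a u r)) ->
  (forall x, Xs x -> inner u (vsub x xh1) <= T) -> 0 < eps ->
  exists F, Rep Xs F /\ forall x, Xs x -> Rabs (wh2 * relu (inner u (vsub x xh1)) - F x) < eps.
Proof.
move=> hu he hP hT heps.
pose W := Rabs wh2 + 1.
have hW : 0 < W by rewrite /W; have := Rabs_pos wh2; lra.
pose de := eps / (4 * W).
have hde : 0 < de by apply: Rdiv_lt_0_compat; lra.
pose h := Rmin epsI de.
have hh : 0 < h by apply: Rmin_pos.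
have hh1 : h <= epsI by apply: Rmin_l.
have hh2 : h <= de by apply: Rmin_r.
have hP' : forall r, Rabs r <= h -> Xs (Pt a u r) by move=> r hr; apply: hP; lra.
have hs1 : 0 < s1 by rewrite /s1; apply: ln3_pos.
pose be := 2 * s1 / h.
have hbe : 0 < be by apply: Rdiv_lt_0_compat; lra.
have hln : 2 * ln 2 / be <= de.
  have h3 := ln3_pos.
  have -> : 2 * ln 2 / be = h * (ln 2 / ln 3) by rewrite /be /s1; field; split; lra.
  have : ln 2 / ln 3 <= 1.
    have := ln3_pos => ?; apply: div_le_l => //.
    rewrite Rmult_1_r; apply: ln_le'; lra.
  have : 0 < ln 2 by rewrite -ln_1; apply: ln_increasing; lra.
  move=> ? ?; have : 0 <= ln 2 / ln 3 by apply: Rlt_le; apply: Rdiv_lt_0_compat => //; apply: ln3_pos.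
  nra.
have [n hn] := INR_archimed de T hde.
pose eta := eps / (4 * W * (INR n * de + 1)).
have hnd : 0 <= INR n * de by apply: Rmult_le_pos; [apply: pos_INR | lra].
have heta : 0 < eta by apply: Rdiv_lt_0_compat; try lra; apply: Rmult_lt_0_compat; lra.
have stepf : forall m, exists F, Rep Xs F /\ forall x, Rabs (Lg (be * (inner u (vsub x xh1) - m)) - F x) <= eta.
  move=> m.
  have hK : 0 < exp (be * (m - inner u (vsub a xh1))) by apply: exp_pos.
  have [F [hF hFe]] := fk_approx Xs a u xh1 h hu hh hP' _ hK eta heta.
  exists F; split => // x; move: (hFe x).
  have -> : Lg (be * (inner u (vsub x xh1) - m)) =
    fk (fun y => exp (- (2 * s1 / h) * (inner u (vsub y xh1) - inner u (vsub a xh1))))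
       (exp (be * (m - inner u (vsub a xh1)))) x.
    rewrite /Lg /fk -exp_plus /be; congr (/ (1 + exp _)); ring.
  done.
have stair : forall N, exists F, Rep Xs F /\ forall x,
    Rabs (St be de (inner u (vsub x xh1)) N - F x) <= INR N * de * eta.
  elim => [|N [F [hF hFe]]].
  - have [F0 [hF0 _]] := stepf 0.
    exists (fun x => 0 * F0 x); split; first by apply: Rep_scale.
    move=> x; rewrite /= Rmult_0_l Rminus_0_r Rabs_R0; lra.
  - have [G [hG hGe]] := stepf (INR N * de).
    exists (fun x => F x + de * G x); split; first by apply: Rep_add => //; apply: Rep_scale.
    move=> x.
    change (St be de (inner u (vsub x xh1)) (S N)) with
      (St be de (inner u (vsub x xh1)) N + de * Lg (be * (inner u (vsub x xh1) - INR N * de))).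
    rewrite S_INR.
    have := hFe x; have := hGe x.
    set A := St be de _ N. set L := Lg _.
    move=> g1 g2.
    have -> : A + de * L - (F x + de * G x) = (A - F x) + de * (L - G x) by ring.
    apply: Rle_trans (Rabs_triang _ _) _.
    rewrite Rabs_mult (Rabs_pos_eq de); last lra.
    have : de * Rabs (L - G x) <= de * eta by apply: Rmult_le_compat_l; lra.
    have -> : (INR N + 1) * de * eta = INR N * de * eta + de * eta by ring.
    lra.
have [F [hF hFe]] := stair n.
exists (fun x => wh2 * F x); split; first by apply: Rep_scale.
move=> x hx.
have ht : inner u (vsub x xh1) <= INR n * de by have := hT x hx; lra.
have b1 := St_bound be de _ n hbe hde ht.
have b2 := hFe x.
rewrite /relu.
set t := inner u (vsub x xh1) in b1 b2 *.
set S := St be de t n in b1 b2.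
have -> : wh2 * Rmax t 0 - wh2 * F x = wh2 * ((Rmax t 0 - S) + (S - F x)) by ring.
rewrite Rabs_mult.
have e1 : Rabs ((Rmax t 0 - S) + (S - F x)) <= de + de + INR n * de * eta.
  apply: Rle_trans (Rabs_triang _ _) _.
  rewrite Rabs_minus_sym; lra.
have e2 : INR n * de * eta <= eps / (4 * W).
  rewrite /eta.
  have -> : INR n * de * (eps / (4 * W * (INR n * de + 1))) = (eps / (4 * W)) * (INR n * de / (INR n * de + 1)).
    field; lra.
  have : INR n * de / (INR n * de + 1) <= 1 by apply: div_le_l; lra.
  have : 0 < eps / (4 * W) by apply: Rdiv_lt_0_compat; lra.
  move=> ? ?; nra.
have e3 : Rabs wh2 <= W by rewrite /W; lra.
have e4 : 0 <= Rabs ((Rmax t 0 - S) + (S - F x)) by apply: Rabs_pos.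
have e5 : Rabs ((Rmax t 0 - S) + (S - F x)) <= 3 * (eps / (4 * W)) by have : de = eps / (4 * W) by []; lra.
apply: Rle_lt_trans (_ : W * (3 * (eps / (4 * W))) < eps).
- apply: Rmult_le_compat => //; apply: Rabs_pos.
- have -> : W * (3 * (eps / (4 * W))) = 3 / 4 * eps by field; lra.
  lra.
Qed.

Theorem lemma7 (D : nat) (X' : vec D -> Prop) (epsI : R)
  (hne : exists a, X' a) (hcpt : vcompact X')
  (hreach : exists r, 0 < r /\ forall a m, X' a -> Med X' m -> r <= vnorm (vsub a m))
  (heps0 : 0 < epsI) (heps1 : epsI < 1) (hepsr : reach_gt X' epsI)
  (xh1 xh2 : vec D) (hx1 : thicken X' epsI xh1) (hx2 : thicken X' epsI xh2)
  (hneq : xh1 <> xh2) (wh2 : R) (eps : R) (heps : 0 < eps) :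
  let wh1 := vscale (/ vnorm (vsub xh2 xh1)) (vsub xh2 xh1) in
  exists (M : nat) (x1 x2 : nat -> vec D) (wt : nat -> R),
    (0 < M)%nat /\
    (forall i, (i < M)%nat ->
       thicken X' epsI (x2 i) /\ thicken X' epsI (x1 i) /\ x2 i <> x1 i) /\
    forall x, thicken X' epsI x ->
      Rabs (wh2 * relu (inner wh1 (vsub x xh1))
            - \big[Rplus/0]_(0 <= i < M)
                (wt i * (tanh (inner (vscale (s1 / (vnorm (vsub (x2 i) (x1 i)))^2)
                                          (vsub (x2 i) (x1 i)))
                                   (vsub x (x1 i)) - s2) + 1))) < eps.
Proof.
move=> wh1.
have hnv : 0 < vnorm (vsub xh2 xh1).
  case: (vnorm_ge0 (vsub xh2 xh1)) => // h0.
  exfalso; apply: hneq; apply: functional_extensionality => i.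
  have hz : inner (vsub xh2 xh1) (vsub xh2 xh1) = 0.
    by rewrite -vnorm_sq -h0 /=; ring.
  have := @inner_zero _ _ hz i; rewrite /vsub; lra.
have hu : inner wh1 wh1 = 1.
  rewrite /wh1 /inner /vscale.
  rewrite (eq_bigr (fun i => (/ vnorm (vsub xh2 xh1) * / vnorm (vsub xh2 xh1)) * (vsub xh2 xh1 i * vsub xh2 xh1 i))); last by move=> i _; ring.
  rewrite sumZ -/(inner _ _) -vnorm_sq /=; field; lra.
have [a ha] := hne.
have hP : forall r, Rabs r <= epsI -> thicken X' epsI (Pt a wh1 r).
  by move=> r hr; apply: thicken_Pt.
have [C hC] := thicken_bound X' epsI xh1 (proj2 hcpt) heps1.
have hT : forall x, thicken X' epsI x -> inner wh1 (vsub x xh1) <= (1 + C) / 2.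
  move=> x hx; have := inner_half wh1 (vsub x xh1); have := hC x hx; rewrite hu; lra.
have [F [[M [x1 [x2 [wt [h0 [h1 h2]]]]]] hFe]] := core (thicken X' epsI) a wh1 xh1 epsI ((1 + C) / 2) wh2 eps hu heps0 hP hT heps.
exists M, x1, x2, wt; split => //; split => // x hx.
have := hFe x hx; rewrite h2; done.
Qed.
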